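(* Let $s,t,z$ be positive integers and let $N_{\text{AGE}}$ be the quantity defined in the context. Then $N_{\text{AGE}}\le N_{\text{Ent}}$, $N_{\text{AGE}}\le N_{\text{SSMM}}$, $N_{\text{AGE}}\le N_{\text{GCSA-NA}}$, and, whenever $s,t$ are not both $1$, $N_{\text{AGE}}\le N_{\text{PolyDot}}$, where these are defined in the context.
   Context: $N_{\text{AGE}}=2s+2z-1$ if $t=1$, and for $t\ge2$, $N_{\text{AGE}}=\min_{\lambda\in\{0,\dots,z\}}\Gamma(\lambda)$ with $\theta=ts+\lambda$, $q=\min\{\lfloor\frac{z-1}{\lambda}\rfloor,t-1\}$ ($q=t-1$ when $\lambda=0$), and $\Gamma(\lambda)=2st^2+2z-1$ if $z>ts-s,\lambda=0$; $st^2+3st-2s+t(z-1)+1$ if $z\le ts-s,\lambda=0$; $2ts+(ts+z)(t-1)+2z-1$ if $\lambda=z$; $(q+2)ts+\theta(t-1)+2z-1$ if $z>ts,0<\lambda<z$; $3ts+\theta(t-1)+2z-1$ if $z\le ts,0<\lambda<z,ts<\lambda+s-1$; $2ts+\theta(t-1)+(q+2)z-q-1$ if $\lambda+s-1<z\le ts,0<\lambda<z,q\lambda\ge s$; $\theta(t+1)+q(z-1)-2\lambda+z+ts+\min\{0,z+s(1-t)-\lambda q-1\}$ if $\lambda+s-1<z\le ts,0<\lambda<z,q\lambda<s$; $2ts+\theta(t-1)+3z+(\lambda+s-1)q-\lambda-s-1$ if $z\le\lambda+s-1\le ts,0<\lambda<z,q\lambda\ge s$; $\theta(t+1)+q(s-1)-3\lambda+3z-1+\min\{0,ts-z+1+\lambda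 q-s\}$ if $z\le\lambda+s-1\le ts,0<\lambda<z,q\lambda<s$. (This is the number of workers of AGE-CMPC.) Baselines: $N_{\text{Ent}}=2st^2+2z-1$ if $z>ts-s$ and $st^2+3st-2s+tz-t+1$ if $z\le ts-s$ (Entangled-CMPC); $N_{\text{SSMM}}=(t+1)(ts+z)-1$; $N_{\text{GCSA-NA}}=2st^2+2z-1$ (single product). With $\theta'=2ts-t$, $p=\min\{\lfloor\frac{z-1}{\theta'-ts}\rfloor,t-1\}$ ($p=t-1$ when $s=1$), $\upsilon'=\max\{ts-2t-s+2,\frac{ts-2t+1}{2}\}$: $N_{\text{PolyDot}}=(p+2)ts+\theta'(t-1)+2z-1$ if $ts<z$ or $t=1$; $2ts+\theta'(t-1)+3z-1$ if $ts-t<z\le ts,s,t\ne1$; $2ts+\theta'(t-1)+2z-1$ if $ts-2t<z\le ts-t,s,t\ne1$; $(t+1)ts+(t-1)(z+t-1)+2z-1$ if $\upsilon'<z\le ts-2t,s,t\ne1$; $\theta't+z$ if $z\le\upsilon',s,t\ne1$; $t^2+2t+tz-1$ if $s=1,t\ge z,t\ne1$. *)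

(* Defs.v *)
From Stdlib Require Import ZArith List Lia Bool.
Import ListNotations.
Open Scope Z_scope.

Definition q_AGE (t z l : Z) : Z :=
  if l =? 0 then t - 1 else Z.min ((z - 1) / l) (t - 1).

Definition Gamma (s t z l : Z) : Z :=
  let theta := t * s + l in
  let q := q_AGE t z l in
  if l =? 0 then
    (if z >? t * s - s then 2 * s * t ^ 2 + 2 * z - 1
     else s * t ^ 2 + 3 * s * t - 2 * s + t * (z - 1) + 1)
  else if l =? z then
    2 * t * s + (t * s + z) * (t - 1) + 2 * z - 1
  (* from here on 0 < lambda < z *)
  else if z >? t * s then
    (q + 2) * t * s + theta * (t - 1) + 2 * z - 1
  else if t * s <? l + s - 1 then
    3 * t * s + theta * (t - 1) + 2 * z - 1
  else if l + s - 1 <? z then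
    (if q * l >=? s then
       2 * t * s + theta * (t - 1) + (q + 2) * z - q - 1
     else
       theta * (t + 1) + q * (z - 1) - 2 * l + z + t * s
       + Z.min 0 (z + s * (1 - t) - l * q - 1))
  else (* z <= lambda + s - 1 <= ts *)
    (if q * l >=? s then
       2 * t * s + theta * (t - 1) + 3 * z + (l + s - 1) * q - l - s - 1
     else
       theta * (t + 1) + q * (s - 1) - 3 * l + 3 * z - 1
       + Z.min 0 (t * s - z + 1 + l * q - s)).

Definition N_AGE (s t z : Z) : Z :=
  if t =? 1 then 2 * s + 2 * z - 1
  else fold_right Z.min (Gamma s t z 0)
         (map (fun l : nat => Gamma s t z (Z.of_nat l)) (seq 0 (S (Z.to_nat z)))).

Definition N_Ent (s t z : Z) : Z :=
  if z >? t * s - s then 2 * s * t ^ 2 + 2 * z - 1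
  else s * t ^ 2 + 3 * s * t - 2 * s + t * z - t + 1.

Definition N_SSMM (s t z : Z) : Z := (t + 1) * (t * s + z) - 1.

Definition N_GCSA_NA (s t z : Z) : Z := 2 * s * t ^ 2 + 2 * z - 1.

Definition p_PolyDot (s t z : Z) : Z :=
  let theta' := 2 * t * s - t in
  if s =? 1 then t - 1 else Z.min ((z - 1) / (theta' - t * s)) (t - 1).

(* z <= upsilon' = max(ts-2t-s+2, (ts-2t+1)/2), with upsilon' rational,
   is equivalent to z <= ts-2t-s+2 or 2z <= ts-2t+1. *)
Definition le_upsilon' (s t z : Z) : bool :=
  orb (z <=? t * s - 2 * t - s + 2) (2 * z <=? t * s - 2 * t + 1).

Definition N_PolyDot (s t z : Z) : Z :=
  let theta' := 2 * t * s - t in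
  let p := p_PolyDot s t z in
  if orb (t * s <? z) (t =? 1) then
    (p + 2) * t * s + theta' * (t - 1) + 2 * z - 1
  else if (s =? 1) then
    t ^ 2 + 2 * t + t * z - 1
  else
  if t * s - t <? z then
    2 * t * s + theta' * (t - 1) + 3 * z - 1
  else if t * s - 2 * t <? z then
    2 * t * s + theta' * (t - 1) + 2 * z - 1
  else if negb (le_upsilon' s t z) then
    (t + 1) * t * s + (t - 1) * (z + t - 1) + 2 * z - 1
  else
    theta' * t + z.

(* Main.v *)
Require Import Defs.
From Stdlib Require Import ZArith List Lia.
Open Scope Z_scope.

Lemma gtb_le (n m : Z) : (n >? m) = false <-> n <= m.
Proof. rewrite Z.gtb_ltb. apply Z.ltb_ge. Qed.

Lemma fold_min_le (a x : Z) (L : list Z) : In x L -> fold_right Z.min a L <= x.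
Proof.
  induction L as [|y L IH]; simpl; [tauto|].
  intros [->|H]; [lia|]. specialize (IH H). lia.
Qed.

Lemma NAGE_le (s t z l : Z) : t <> 1 -> 0 <= l <= z -> N_AGE s t z <= Gamma s t z l.
Proof.
  intros Ht Hl. unfold N_AGE.
  replace (t =? 1) with false by (symmetry; apply Z.eqb_neq; auto).
  apply fold_min_le.
  replace (Gamma s t z l) with ((fun l0 : nat => Gamma s t z (Z.of_nat l0)) (Z.to_nat l)) by (simpl; f_equal; lia).
  apply (in_map (fun l0 : nat => Gamma s t z (Z.of_nat l0))).
  apply in_seq. lia.
Qed.

Theorem lemma4 (s t z : Z) (hs : 0 < s) (ht : 0 < t) (hz : 0 < z) :
  N_AGE s t z <= N_Ent s t z /\
  N_AGE s t z <= N_SSMM s t z /\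
  N_AGE s t z <= N_GCSA_NA s t z /\
  (~ (s = 1 /\ t = 1) -> N_AGE s t z <= N_PolyDot s t z).
Proof.
  destruct (Z.eq_dec t 1) as [Ht1|Ht1].
  { subst t. unfold N_AGE, N_Ent, N_SSMM, N_GCSA_NA, N_PolyDot, p_PolyDot. rewrite Z.eqb_refl.
    repeat split.
    - destruct (z >? 1 * s - s) eqn:E; lia.
    - lia.
    - lia.
    - intros Hn. destruct (s =? 1) eqn:E1; [lia|].
      assert (0 <= (z - 1) / (2 * 1 * s - 1 - 1 * s)).
      { apply Z.div_pos; lia. }
      rewrite Bool.orb_true_r. lia. }
  assert (G0 := NAGE_le s t z 0 Ht1 ltac:(lia)).
  assert (Gz := NAGE_le s t z z Ht1 ltac:(lia)).
  unfold Gamma in G0, Gz. rewrite Z.eqb_refl in G0. cbv beta iota zeta in G0.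
  replace (z =? 0) with false in Gz by (symmetry; apply Z.eqb_neq; lia).
  rewrite Z.eqb_refl in Gz.
  assert (t2 : 2 <= t) by lia.
  repeat split.
  - unfold N_Ent. destruct (z >? t * s - s); lia.
  - unfold N_SSMM. lia.
  - unfold N_GCSA_NA. destruct (z >? t * s - s) eqn:E; [lia|].
    apply gtb_le in E. nia.
  - intros _. unfold N_PolyDot.
    destruct (t * s <? z) eqn:EA.
    +
      apply Z.ltb_lt in EA. cbn [orb].
      destruct (Z.eq_dec s 1) as [Hs1|Hs1].
      * subst s. unfold p_PolyDot. rewrite Z.eqb_refl. cbv beta iota zeta.
        destruct (z >? t * 1 - 1) eqn:E; [|apply gtb_le in E; lia].
        nia.
      * assert (GA := NAGE_le s t z (t * s - t) Ht1 ltac:(nia)).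
        unfold Gamma, q_AGE in GA.
        replace (t * s - t =? 0) with false in GA by (symmetry; apply Z.eqb_neq; nia).
        replace (t * s - t =? z) with false in GA by (symmetry; apply Z.eqb_neq; nia).
        replace (z >? t * s) with true in GA by (symmetry; apply Z.gtb_lt; lia).
        unfold p_PolyDot.
        replace (s =? 1) with false by (symmetry; apply Z.eqb_neq; auto).
        replace (2 * t * s - t - t * s) with (t * s - t) by ring.
        nia.
    + apply Z.ltb_ge in EA.
      replace (t =? 1) with false by (symmetry; apply Z.eqb_neq; auto). cbn [orb].
      destruct (s =? 1) eqn:Es1.
      * apply Z.eqb_eq in Es1. subst s.
        destruct (z >? t * 1 - 1) eqn:E; [apply Z.gtb_lt in E|apply gtb_le in E].
        -- assert (z = t) by lia. subst z. nia.
        -- nia.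
      * apply Z.eqb_neq in Es1.
        destruct (t * s - t <? z) eqn:EC.
        --
          apply Z.ltb_lt in EC.
          set (l := t * s - t - s + 2).
          assert (Hl : 0 < l < z) by (unfold l; nia).
          assert (GC := NAGE_le s t z l Ht1 ltac:(lia)).
          assert (Hq : (z - 1) / l = 1).
          { symmetry. apply Z.div_unique with (z - 1 - l); [left|]; unfold l in *; nia. }
          unfold Gamma, q_AGE in GC.
          replace (l =? 0) with false in GC by (symmetry; apply Z.eqb_neq; lia).
          replace (l =? z) with false in GC by (symmetry; apply Z.eqb_neq; lia).
          rewrite Hq in GC.
          replace (Z.min 1 (t - 1)) with 1 in GC by lia.
          replace (z >? t * s) with false in GC by (symmetry; apply gtb_le; lia).
          replace (t * s <? l + s - 1) with false in GC by (symmetry; apply Z.ltb_ge; unfold l; lia).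
          replace (1 * l >=? s) with true in GC by (symmetry; apply Z.geb_le; unfold l; nia).
          destruct (l + s - 1 <? z); unfold l in *; nia.
        -- apply Z.ltb_ge in EC.
           destruct (t * s - 2 * t <? z) eqn:ED; [nia|].
           apply Z.ltb_ge in ED.
           destruct (le_upsilon' s t z) eqn:EF; cbn [negb]; [|nia].
           unfold le_upsilon' in EF.
           apply Bool.orb_true_iff in EF.
           destruct EF as [EF|EF]; [apply Z.leb_le in EF|apply Z.leb_le in EF]; nia.
Qed.
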